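(* Let $p=\tfrac23$, $q=\tfrac13$, and let $g_0(z),g_1(z),g_2(z),\dots$ and $g_\beta(z)$ be the formal power series in $z$ uniquely determined by $$g_0=1+zg_\beta+qzg_2,\qquad g_\beta=qzg_1,\qquad g_1=zg_0+qzg_3,\qquad g_i=pzg_{i-1}+qzg_{i+2}\ (i\ge2).$$ Put $G(u,z)=\sum_{i\ge0}u^ig_i(z)$, write $V=uz$, $x=z^3$, and let $t=t(x)$ be the formal power series with $t(0)=0$ satisfying $x=\tfrac{27}{4}t(1-t)^2$. Then: (i) $$G(u,z)=2\,\frac{2+\frac{2}{3(1-t)}V}{(1-3t)(4-3t)}\cdot\frac{1}{1-\frac{2}{3(1-t)}V};$$ in particular, written in the variable $V$, only powers of $z$ that are multiples of $3$ appear. (ii) For $j\ge1$, $$[V^j]G=\frac{6}{(1-3t)(4-3t)}\Big(\frac23\cdot\frac1{1-t}\Big)^j,\qquad [u^j]G=z^j\frac{6}{(1-3t)(4-3t)}\Big(\frac23\cdot\frac1{1-t}\Big)^j.$$ (iii) For $j\ge1$ and $N\ge0$, $$[z^{j+3N}u^j]G(u,z)=\sum_{i=0}^N\frac{2^{2i+j-1}}{3^{2N+i+j-1}}\binom{2N+j+i}{i}.$$ (iv) For $N\ge0$, $$[z^{3N}]g_0=\sum_{i=0}^N\frac{2^{2i}}{3^{2N+i}}\binom{2N+i}{i},\qquad [z^{3N+2}]g_\beta=\frac13[z^{3N+1}]g_1=\sum_{i=0}^N\frac{2^{2i}}{3^{2N+i+1}}\binom{2N+1+i}{i}.$$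
   Context: Dual online bin-packing model: bins have size 1; at each step either a single item of size $\tfrac23$ arrives (probability $p=\tfrac23$) or a double-pack of two items of size $\tfrac13$ arrives (probability $q=\tfrac13$). State $i\ge0$ means $i$ boxes filled to $\tfrac23$; $\beta$ is an exceptional state (one box filled to $\tfrac13$). The coefficient of $z^n$ in $g_i(z)$ (resp. $g_\beta(z)$) is the probability that $n$ random steps starting from state $0$ lead to state $i$ (resp. $\beta$); these series are defined by the recursion in the claim. $[\cdot]$ denotes coefficient extraction. *)

(* Defs.v *)
From mathcomp Require Import all_boot all_order all_algebra.
Set Implicit Arguments. Unset Strict Implicit. Unset Printing Implicit Defensive.
Import Order.TTheory GRing.Theory Num.Theory.
Local Open Scope ring_scope.

Definition fps := nat -> rat.
Definition fps_const (c : rat) : fps := fun n => if n == 0%N then c else 0.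
Definition fps_X : fps := fun n => if n == 1%N then 1 else 0.
Definition fps_add (f g : fps) : fps := fun n => f n + g n.
Definition fps_scale (c : rat) (f : fps) : fps := fun n => c * f n.
Definition fps_mul (f g : fps) : fps :=
  fun n => \sum_(i < n.+1) f i * g (n - i)%N.
Definition fps_pow (f : fps) (k : nat) : fps := iter k (fps_mul f) (fps_const 1).

(* multiplicative inverse (meaningful when f 0 <> 0), coefficients by the
   usual recursion  inv_0 = 1/f_0,  inv_{n+1} = -(1/f_0) sum_{k=1}^{n+1} f_k inv_{n+1-k} *)
Fixpoint fps_inv_seq (f : fps) (n : nat) : seq rat :=
  match n with
  | 0%N => [:: (f 0%N)^-1]
  | n'.+1 => let s := fps_inv_seq f n' in
      rcons s (- (f 0%N)^-1 * \sum_(i < n'.+1) f i.+1 * nth 0 s (n' - i)%N)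
  end.
Definition fps_inv (f : fps) : fps := fun n => nth 0 (fps_inv_seq f n) n.

(* substitution x := z^3 *)
Definition fps_sub3 (f : fps) : fps :=
  fun n => if (3 %| n)%N then f (n %/ 3)%N else 0.
Definition fps_shift (j : nat) (f : fps) : fps :=
  fun n => if (j <= n)%N then f (n - j)%N else 0.

(* ---------- bivariate series: F i n = [u^i z^n] F ---------- *)
Definition bps := nat -> nat -> rat.
Definition bps_const (c : rat) : bps :=
  fun i n => if (i == 0%N) && (n == 0%N) then c else 0.
Definition bps_of_z (f : fps) : bps := fun i n => if i == 0%N then f n else 0.
Definition bps_V : bps := fun i n => if (i == 1%N) && (n == 1%N) then 1 else 0.
Definition bps_add (F H : bps) : bps := fun i n => F i n + H i n.
Definition bps_scale (c : rat) (F : bps) : bps := fun i n => c * F i n.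
Definition bps_mul (F H : bps) : bps :=
  fun i n => \sum_(a < i.+1) \sum_(b < n.+1) F a b * H (i - a)%N (n - b)%N.
Definition bps_pow (F : bps) (k : nat) : bps := iter k (bps_mul F) (bps_const 1).
(* 1/(1-W) := sum_k W^k, for W with zero constant term (then W^k has no
   monomial u^i z^n with i+n < k, so the sum below is the full sum) *)
Definition bps_geom (W : bps) : bps :=
  fun i n => \sum_(k < (i + n).+1) bps_pow W k i n.

Definition p_step : rat := 2%:R / 3%:R.
Definition q_step : rat := 1 / 3%:R.

(* Main.v *)
Require Import Defs.
From HB Require Import structures.
From mathcomp Require Import all_boot all_order all_algebra.
From mathcomp Require Import boolp.
From mathcomp Require Import ring zify.
From Stdlib Require Import FunctionalExtensionality.
Import Order.TTheory GRing.Theory Num.Theory.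
Set Implicit Arguments. Unset Strict Implicit. Unset Printing Implicit Defensive.
Local Open Scope ring_scope.

Definition tr (n : nat) (f : fps) : {poly rat} := \poly_(i < n.+1) f i.
Variant agree n (f : fps) (P : {poly rat}) : Prop := Agree of (forall k, (k <= n)%N -> f k = P`_k).

Lemma agree_tr n f : agree n f (tr n f).
Proof. by constructor=> k kn; rewrite coef_poly ltnS kn. Qed.

Lemma agree_add n f g P Q : agree n f P -> agree n g Q -> agree n (fps_add f g) (P + Q).
Proof. by move=> [hf] [hg]; constructor=> k kn; rewrite coefD /fps_add hf ?hg. Qed.

Lemma agree_mul n f g P Q : agree n f P -> agree n g Q -> agree n (fps_mul f g) (P * Q).
Proof.
move=> [hf] [hg]; constructor=> k kn; rewrite coefM /fps_mul; apply: eq_bigr => i _.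
have ik : (i <= k)%N by rewrite -ltnS.
rewrite hf ?hg //; [exact: leq_trans (leq_subr _ _) kn | exact: leq_trans ik kn].
Qed.

Lemma agree_const n c : agree n (fps_const c) c%:P.
Proof. by constructor=> k _; rewrite coefC /fps_const; case: k. Qed.

Lemma agree_X n : agree n fps_X 'X.
Proof. by constructor=> k _; rewrite coefX /fps_X; case: k => [|[|k]]. Qed.

Definition fps_opp (f : fps) : fps := fun n => - f n.
Definition fps_zero : fps := fun _ => 0.

Lemma agree_opp n f P : agree n f P -> agree n (fps_opp f) (- P).
Proof. by move=> [hf]; constructor=> k kn; rewrite coefN /fps_opp hf. Qed.

Lemma agree_eq (f g : fps) : (forall n, exists P, agree n f P /\ agree n g P) -> f = g.
Proof.
move=> h; apply: functional_extensionality => n.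
by have [P [[h1] [h2]]] := h n; rewrite h1 // h2.
Qed.

Lemma fmulA : associative fps_mul.
Proof.
move=> f g h; apply: agree_eq => n.
exists (tr n f * (tr n g * tr n h)); split; first by do ! apply: agree_mul; apply: agree_tr.
rewrite mulrA; by do ! apply: agree_mul; apply: agree_tr.
Qed.

Lemma fmulC : commutative fps_mul.
Proof.
move=> f g; apply: agree_eq => n.
exists (tr n f * tr n g); split; first by do ! apply: agree_mul; apply: agree_tr.
rewrite mulrC; by do ! apply: agree_mul; apply: agree_tr.
Qed.

Lemma fmul1 : left_id (fps_const 1) fps_mul.
Proof.
move=> f; apply: agree_eq => n.
exists (1%:P * tr n f); split; first by apply: agree_mul; [apply: agree_const|apply: agree_tr].
rewrite mul1r; apply: agree_tr.
Qed.

Lemma fmulDl : left_distributive fps_mul fps_add.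
Proof.
move=> f g h; apply: agree_eq => n.
exists ((tr n f + tr n g) * tr n h); split.
  by apply: agree_mul; [apply: agree_add|]; apply: agree_tr.
rewrite mulrDl; by apply: agree_add; apply: agree_mul; apply: agree_tr.
Qed.

Lemma faddA : associative fps_add.
Proof. by move=> f g h; apply: functional_extensionality => n; rewrite /fps_add addrA. Qed.
Lemma faddC : commutative fps_add.
Proof. by move=> f g; apply: functional_extensionality => n; rewrite /fps_add addrC. Qed.
Lemma fadd0 : left_id fps_zero fps_add.
Proof. by move=> f; apply: functional_extensionality => n; rewrite /fps_add add0r. Qed.
Lemma faddN : left_inverse fps_zero fps_opp fps_add.
Proof. by move=> f; apply: functional_extensionality => n; rewrite /fps_add /fps_opp addNr. Qed.

Definition FPS : Type := nat -> rat.
HB.instance Definition _ := gen_eqMixin FPS.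
HB.instance Definition _ := gen_choiceMixin FPS.
HB.instance Definition _ := GRing.isZmodule.Build FPS faddA faddC fadd0 faddN.

Lemma fone_neq0 : (fps_const 1 : FPS) != 0.
Proof.
apply/eqP => /(congr1 (fun f : FPS => f 0%N)); rewrite /fps_const /=.
by [].
Qed.
HB.instance Definition _ := GRing.Zmodule_isComNzRing.Build FPS fmulA fmulC fmul1 fmulDl fone_neq0.


Lemma faddE (f g : FPS) n : (f + g) n = f n + g n. Proof. by []. Qed.
Lemma foppE (f : FPS) n : (- f) n = - f n. Proof. by []. Qed.
Lemma fsubE (f g : FPS) n : (f - g) n = f n - g n. Proof. by []. Qed.
Lemma f0E n : (0 : FPS) n = 0. Proof. by []. Qed.
Lemma f1E n : (1 : FPS) n = if n == 0%N then 1 else 0. Proof. by []. Qed.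
Lemma fmulE (f g : FPS) n : (f * g) n = \sum_(i < n.+1) f i * g (n - i)%N. Proof. by []. Qed.
Lemma fps_addE (f g : fps) : fps_add f g = (f : FPS) + g. Proof. by []. Qed.
Lemma fps_mulE (f g : fps) : fps_mul f g = (f : FPS) * g. Proof. by []. Qed.
Lemma fps_powE (f : fps) k : fps_pow f k = (f : FPS) ^+ k.
Proof. by elim: k => // k IH; rewrite exprS -IH. Qed.

Definition cst (c : rat) : FPS := fps_const c.
Lemma cstE c n : cst c n = if n == 0%N then c else 0. Proof. by []. Qed.
Lemma fps_constE c : fps_const c = cst c. Proof. by []. Qed.
Lemma cstD a b : cst (a + b) = cst a + cst b.
Proof. by apply: functional_extensionality => n; rewrite faddE !cstE; case: eqP; rewrite ?addr0. Qed.
Lemma cstN a : cst (- a) = - cst a.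
Proof. by apply: functional_extensionality => n; rewrite foppE !cstE; case: eqP; rewrite ?oppr0. Qed.
Lemma cstM a b : cst (a * b) = cst a * cst b.
Proof.
apply: agree_eq => n; exists (a%:P * b%:P); split.
  by rewrite -polyCM; apply: agree_const.
by apply: agree_mul; apply: agree_const.
Qed.
Lemma cst1 : cst 1 = 1. Proof. by []. Qed.
Lemma fps_scaleE c f : fps_scale c f = cst c * (f : FPS).
Proof.
apply: agree_eq => n; exists (c%:P * tr n f); split; last by apply: agree_mul; [apply: agree_const|apply: agree_tr].
constructor=> k kn; rewrite coefCM /fps_scale; by case: (agree_tr n f) => ->.
Qed.
Lemma cst_nmod : nmod_morphism cst.
Proof. by split; [|exact: cstD]; apply: functional_extensionality => n; rewrite cstE f0E; case: eqP. Qed.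
HB.instance Definition _ := GRing.isNmodMorphism.Build rat FPS cst cst_nmod.
Lemma cst_mon : GRing.monoid_morphism cst.
Proof. by split; [exact: cst1|exact: cstM]. Qed.
HB.instance Definition _ := GRing.isMonoidMorphism.Build rat FPS cst cst_mon.




Definition XX : FPS := fps_X.
Lemma fps_XE : fps_X = XX. Proof. by []. Qed.

Lemma agree_eqn n f g P : agree n f P -> agree n g P -> f n = g n.
Proof. by move=> [h1] [h2]; rewrite h1 // h2. Qed.

Lemma agree_ext n f g P : f = g -> agree n f P -> agree n g P.
Proof. by move=> ->. Qed.

Lemma XmulE (f : FPS) n : (XX * f) n = if n is n'.+1 then f n' else 0.
Proof.
have [h] := agree_mul (agree_X n) (agree_tr n f).
transitivity (fps_mul fps_X f n); first by []. rewrite h //.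
case: n h => [|n] h; first by rewrite coefXM.
by rewrite coefXM /= coef_poly ltnS leqnSn.
Qed.

Lemma agree_sub3 n f P : agree n f P -> agree n (fps_sub3 f) (P \Po 'X^3).
Proof.
move=> [h]; constructor=> k kn; rewrite coef_comp_poly_Xn // /fps_sub3.
case: ifP => // _; rewrite h //; exact: leq_trans (leq_div _ _) kn.
Qed.

Definition sub3 (f : FPS) : FPS := fps_sub3 f.
Lemma sub3D f g : sub3 (f + g) = sub3 f + sub3 g.
Proof.
apply: agree_eq => n; exists ((tr n f + tr n g) \Po 'X^3); split.
  by apply: agree_sub3; apply: agree_add; apply: agree_tr.
rewrite comp_polyD; by apply: agree_add; apply: agree_sub3; apply: agree_tr.
Qed.
Lemma sub3M f g : sub3 (f * g) = sub3 f * sub3 g.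
Proof.
apply: agree_eq => n; exists ((tr n f * tr n g) \Po 'X^3); split.
  by apply: agree_sub3; apply: agree_mul; apply: agree_tr.
rewrite comp_polyM; by apply: agree_mul; apply: agree_sub3; apply: agree_tr.
Qed.
Lemma sub3C c : sub3 (cst c) = cst c.
Proof.
apply: agree_eq => n; exists (c%:P \Po 'X^3); split.
  by apply: agree_sub3; apply: agree_const.
rewrite comp_polyC; exact: agree_const.
Qed.
Lemma agree_pow n (f : FPS) P k : agree n f P -> agree n (f ^+ k) (P ^+ k).
Proof.
move=> h; elim: k => [|k IH]; first by rewrite !expr0 -cst1 -polyC1; apply: agree_const.
by rewrite !exprS; apply: agree_mul.
Qed.

Lemma sub3X f : sub3 (XX * f) = XX ^+ 3 * sub3 f.
Proof.
apply: agree_eq => n; exists (('X * tr n f) \Po 'X^3); split.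
  by apply: agree_sub3; apply: agree_mul; [apply: agree_X|apply: agree_tr].
rewrite comp_polyM comp_polyX; apply: agree_mul; last by apply: agree_sub3; apply: agree_tr.
exact: agree_pow (agree_X n).
Qed.

Lemma shiftE j f : fps_shift j f = XX ^+ j * (f : FPS).
Proof.
apply: agree_eq => n; exists ('X^j * tr n f); split.
  constructor=> k kn; rewrite coefXnM /fps_shift ltnNge; case: ifP => //= jk.
  by case: (agree_tr n f) => ->; [|exact: leq_trans (leq_subr _ _) kn].
apply: agree_mul; [exact: agree_pow (agree_X n)|exact: agree_tr].
Qed.

Lemma size_inv_seq f n : size (fps_inv_seq f n) = n.+1.
Proof. by elim: n => //= n IH; rewrite size_rcons IH. Qed.

Lemma nth_inv_seq f n k : (k <= n)%N -> nth 0 (fps_inv_seq f n) k = fps_inv f k.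
Proof.
elim: n => [|n IH]; first by rewrite leqn0 => /eqP ->.
rewrite leq_eqVlt => /orP [/eqP -> //| kn].
by rewrite /= nth_rcons size_inv_seq kn IH.
Qed.

Lemma fps_inv0 f : fps_inv f 0 = (f 0%N)^-1. Proof. by []. Qed.
Lemma fps_invS f n : fps_inv f n.+1 =
  - (f 0%N)^-1 * \sum_(i < n.+1) f i.+1 * fps_inv f (n - i)%N.
Proof.
rewrite {1}/fps_inv /= nth_rcons size_inv_seq ltnn eqxx; congr (_ * _).
by apply: eq_bigr => i _; rewrite nth_inv_seq // leq_subr.
Qed.

Lemma fps_invP (f : FPS) : f 0%N != 0 -> f * fps_inv f = 1.
Proof.
move=> f0; apply: functional_extensionality => n; rewrite fmulE f1E.
case: n => [|n]; first by rewrite big_ord1 fps_inv0 divff.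
rewrite big_ord_recl /= fps_invS mulrA mulrN mulfV // mulN1r.
under [X in _ + X]eq_bigr do rewrite /bump /= add1n subSS.
by rewrite addNr.
Qed.

Lemma cstX a k : cst (a ^+ k) = cst a ^+ k.
Proof. exact: rmorphXn. Qed.

Lemma identA (t s X : FPS) : (1 - t) * s = 1 -> X = cst (27%:R / 4%:R) * (t * (1 - t) ^+ 2) ->
  cst (2%:R / 3%:R) * s = cst (2%:R / 3%:R) + cst (1 / 3%:R) * X * (cst (2%:R / 3%:R) * s) ^+ 3.
Proof.
move=> hs ->.
have -> : cst (1 / 3%:R) * (cst (27%:R / 4%:R) * (t * (1 - t) ^+ 2)) * (cst (2%:R / 3%:R) * s) ^+ 3
   = cst (2%:R / 3%:R) * (t * s * ((1 - t) * s) ^+ 2).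
  transitivity (cst (1 / 3%:R) * cst (27%:R / 4%:R) * cst (2%:R / 3%:R) ^+ 3 * (t * s * ((1 - t) * s) ^+ 2)).
    ring.
  rewrite -cstX -!rmorphM; congr (cst _ * _); field.
rewrite hs expr1n mulr1.
transitivity (cst (2%:R / 3%:R) * ((1 - t) * s) + cst (2%:R / 3%:R) * (t * s)); first ring.
by rewrite hs mulr1.
Qed.

Lemma identB (t s X Di : FPS) : (1 - t) * s = 1 -> X = cst (27%:R / 4%:R) * (t * (1 - t) ^+ 2) ->
  ((1 - cst 3%:R * t) * (cst 4%:R - cst 3%:R * t)) * Di = 1 ->
  let a := cst (2%:R / 3%:R) * s in
  cst 4%:R * Di = 1 + cst 2%:R * X * Di * a + cst 2%:R * X * Di * a ^+ 2.
Proof.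
move=> hs hX hD a.
have e1 : X * a = cst 9%:R * (t * (1 - t)) * cst (1 / 2%:R).
  transitivity (cst (27%:R / 4%:R) * cst (2%:R / 3%:R) * (t * (1 - t) * ((1 - t) * s))).
    by rewrite hX /a; ring.
  rewrite hs mulr1 -cstM [RHS]mulrC [RHS]mulrA -cstM; congr (cst _ * _); field.
have e2 : X * a ^+ 2 = cst 3%:R * t.
  transitivity (cst (27%:R / 4%:R) * cst (2%:R / 3%:R) ^+ 2 * (t * ((1 - t) * s) ^+ 2)).
    by rewrite hX /a; ring.
  rewrite hs expr1n mulr1 -cstX -cstM; congr (cst _ * _); field.
transitivity (1 + (cst 2%:R * (X * a) + cst 2%:R * (X * a ^+ 2)) * Di); last by ring.
rewrite e1 e2.
transitivity (1 + ((cst 2%:R * cst (1 / 2%:R)) * cst 9%:R * (t * (1 - t)) + cst 2%:R * (cst 3%:R * t)) * Di); last by ring.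
rewrite -cstM.
have -> : (2%:R * (1 / 2%:R) : rat) = 1 by field.
rewrite rmorph1 !rmorph_nat.
transitivity ((1 - 3%:R * t) * (4%:R - 3%:R * t) * Di + (1 * 9%:R * (t * (1 - t)) + 2%:R * (3%:R * t)) * Di); first ring.
by rewrite !rmorph_nat in hD; rewrite hD.
Qed.

Lemma cmulE c (f : FPS) n : (cst c * f) n = c * f n.
Proof. by rewrite -fps_scaleE. Qed.

Lemma sub3E f n : sub3 f n = if (3 %| n)%N then f (n %/ 3)%N else 0. Proof. by []. Qed.
Lemma sub3_3 f k : sub3 f (3 * k)%N = f k.
Proof. by rewrite sub3E dvdn_mulr // mulKn. Qed.
Lemma sub3_1 : sub3 1 = 1. Proof. by rewrite -cst1 sub3C. Qed.
Lemma sub3Xn f k : sub3 (f ^+ k) = sub3 f ^+ k.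
Proof. by elim: k => [|k IH]; rewrite ?expr0 ?sub3_1 // !exprS sub3M IH. Qed.

Lemma XpowE j (f : FPS) n : (XX ^+ j * f) n = if (j <= n)%N then f (n - j)%N else 0.
Proof. by rewrite -shiftE. Qed.
Lemma XpowE' j (f : FPS) m : (XX ^+ j * f) (j + m)%N = f m.
Proof. by rewrite XpowE leq_addr addKn. Qed.

Definition sys (g : nat -> FPS) (gb : FPS) : Prop :=
  [/\ g 0%N = 1 + XX * gb + cst (1 / 3%:R) * (XX * g 2%N),
      gb = cst (1 / 3%:R) * (XX * g 1%N),
      g 1%N = XX * g 0%N + cst (1 / 3%:R) * (XX * g 3%N) &
      forall i, (2 <= i)%N -> g i = cst (2%:R / 3%:R) * (XX * g i.-1) + cst (1 / 3%:R) * (XX * g i.+2)].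

Lemma sys_unique g gb g' gb' : sys g gb -> sys g' gb' ->
  forall n, (forall i, g i n = g' i n) /\ gb n = gb' n.
Proof.
move=> [h0 hb h1 hi] [h0' hb' h1' hi']; elim=> [|n [IH IHb]].
  split; last by rewrite hb hb' !cmulE !XmulE.
  case=> [|[|i]]; first by rewrite h0 h0' !faddE !cmulE !XmulE.
    by rewrite h1 h1' !faddE !cmulE !XmulE.
  by rewrite hi // hi' // !faddE !cmulE !XmulE.
split; last by rewrite hb hb' !cmulE !XmulE IH.
case=> [|[|i]]; first by rewrite h0 h0' !faddE !cmulE !XmulE IH IHb.
  by rewrite h1 h1' !faddE !cmulE !XmulE !IH.
by rewrite hi // hi' // !faddE !cmulE !XmulE !IH.
Qed.

Definition Hf (Di a : FPS) (j : nat) : FPS :=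
  if j is 0 then sub3 (cst 4%:R * Di) else XX ^+ j * sub3 (cst 6%:R * (Di * a ^+ j)).

Lemma cq6 : cst (1 / 3%:R) * 6%:R = 2%:R :> FPS.
Proof.
rewrite -[6%:R](rmorph_nat cst) -[2%:R](rmorph_nat cst) -cstM.
by rewrite (_ : 1 / 3%:R * 6%:R = 2%:R) //; field.
Qed.
Lemma cp6 : cst (2%:R / 3%:R) * 6%:R = 4%:R :> FPS.
Proof.
rewrite -[6%:R](rmorph_nat cst) -[4%:R](rmorph_nat cst) -cstM.
by rewrite (_ : 2%:R / 3%:R * 6%:R = 4%:R) //; field.
Qed.

Lemma sub3XX : sub3 XX = XX ^+ 3.
Proof. by rewrite -[XX]mulr1 sub3X sub3_1 !mulr1. Qed.
Lemma Hf0 Di a : Hf Di a 0 = sub3 (cst 4%:R * Di). Proof. by []. Qed.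
Lemma HfS Di a j : Hf Di a j.+1 = XX ^+ j.+1 * sub3 (cst 6%:R * (Di * a ^+ j.+1)). Proof. by []. Qed.

Ltac s3 := do 4 rewrite ?sub3D ?sub3XX ?sub3X ?sub3M ?sub3C ?sub3Xn ?sub3_1.

Lemma H_sys (Di a : FPS) :
  a = cst (2%:R / 3%:R) + cst (1 / 3%:R) * XX * a ^+ 3 ->
  cst 4%:R * Di = 1 + cst 2%:R * XX * Di * a + cst 2%:R * XX * Di * a ^+ 2 ->
  sys (Hf Di a) (cst (1 / 3%:R) * (XX * Hf Di a 1)).
Proof.
move=> hA hB.
have hAk k : Di * a ^+ k.+1 = cst (2%:R / 3%:R) * (Di * a ^+ k) + cst (1 / 3%:R) * (XX * (Di * a ^+ k.+3)).
  transitivity (Di * a ^+ k * a); first by rewrite exprSr mulrA.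
  by rewrite [X in _ * X]hA !exprS; ring.
split => //.
- rewrite Hf0 !HfS.
  have -> : cst 4%:R * Di = 1 + XX * (cst 2%:R * (Di * a) + cst 2%:R * (Di * a ^+ 2)) by rewrite hB; ring.
  s3.
  transitivity (1 + (cst (1 / 3%:R) * 6%:R) * (XX ^+ 3 * (sub3 Di * sub3 a) + XX ^+ 3 * (sub3 Di * sub3 a ^+ 2))); last by rewrite ?rmorph_nat; ring.
  by rewrite cq6 ?rmorph_nat; ring.
- rewrite Hf0 !HfS hAk; s3; rewrite ?rmorph_nat.
  transitivity (XX * ((cst (2%:R / 3%:R) * 6%:R) * sub3 Di) + cst (1 / 3%:R) * (XX * (XX ^+ 3 * (6%:R * (sub3 Di * sub3 a ^+ 3))))); first ring.
  by rewrite cp6; ring.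
- case=> [|[|k]] // _; rewrite !HfS hAk /=.
  s3; rewrite ?rmorph_nat !exprS; ring.
Qed.

Definition rr : rat := 4%:R / 3%:R.
Definition Ssum (m N : nat) : rat := \sum_(i < N.+1) rr ^+ i * ('C(m + i, i))%:R.

Lemma S0 m : Ssum m 0 = 1.
Proof. by rewrite /Ssum big_ord1 expr0 addn0 bin0 mul1r. Qed.

Lemma SP m N : Ssum m.+1 N.+1 = Ssum m N.+1 + rr * Ssum m.+1 N.
Proof.
rewrite /Ssum big_ord_recl [X in _ = X + _]big_ord_recl /= !addn0 !bin0 -addrA; congr (_ + _).
rewrite mulr_sumr -big_split /=; apply: eq_bigr => i _.
rewrite /bump /= !add1n !addnS addSn binS natrD exprS; ring.
Qed.

Definition Gt (M i : nat) : rat := 3%:R * i%:R * rr ^+ i * ('C(2 * M + 1 + i, i))%:R.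

Lemma Gt_step M i : (2 * M + 2)%:R * (rr ^+ i * (('C(2 * M + 2 + i, i))%:R + 3%:R * ('C(2 * M + 1 + i, i))%:R))
   = Gt M i.+1 - Gt M i.
Proof.
have f1 : ((2 * M + 2) * 'C(2 * M + 2 + i, i) = (2 * M + 2 + i) * 'C(2 * M + 1 + i, i))%N.
  have := mul_bin_down (2 * M + 2 + i) i.
  have -> : (2 * M + 2 + i).-1 = (2 * M + 1 + i)%N by lia.
  by have -> : (2 * M + 2 + i - i = 2 * M + 2)%N by lia.
have f2 : (i.+1 * 'C(2 * M + 1 + i.+1, i.+1) = (2 * M + 2 + i) * 'C(2 * M + 1 + i, i))%N.
  have := mul_bin_diag (2 * M + 2 + i) i.
  have -> : (2 * M + 2 + i).-1 = (2 * M + 1 + i)%N by lia.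
  by have -> : (2 * M + 1 + i.+1 = 2 * M + 2 + i)%N by lia.
have e1 := congr1 (fun n => n%:R : rat) f1; have e2 := congr1 (fun n => n%:R : rat) f2.
rewrite /= !natrM in e1 e2.
rewrite /Gt.
transitivity (rr ^+ i * ((2 * M + 2)%:R * ('C(2 * M + 2 + i, i))%:R + 3%:R * (2 * M + 2)%:R * ('C(2 * M + 1 + i, i))%:R)); first ring.
transitivity (3%:R * rr ^+ i.+1 * (i.+1%:R * ('C(2 * M + 1 + i.+1, i.+1))%:R) - 3%:R * i%:R * rr ^+ i * ('C(2 * M + 1 + i, i))%:R); last ring.
rewrite e1 e2 exprS /rr !natrD ?natrM; field; by [].
Qed.

Lemma telesc M n : (2 * M + 2)%:R * \sum_(i < n) rr ^+ i * (('C(2 * M + 2 + i, i))%:R + 3%:R * ('C(2 * M + 1 + i, i))%:R)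
   = Gt M n.
Proof.
elim: n => [|n IH]; first by rewrite big_ord0 mulr0 /Gt; ring.
by rewrite big_ord_recr /= mulrDr IH Gt_step addrC subrK.
Qed.

Lemma ST M : Ssum (2 * M + 2) M.+1 = 3%:R * Ssum (2 * M + 1) M + 2%:R * Ssum (2 * M + 2) M.
Proof.
rewrite /Ssum big_ord_recr /=.
suff -> : rr ^+ M.+1 * ('C(2 * M + 2 + M.+1, M.+1))%:R =
   \sum_(i < M.+1) rr ^+ i * (('C(2 * M + 2 + i, i))%:R + 3%:R * ('C(2 * M + 1 + i, i))%:R).
  rewrite !mulr_sumr -!big_split /=; apply: eq_bigr => i _; ring.
apply: (@mulfI _ (2 * M + 2)%:R); first by rewrite pnatr_eq0; lia.
rewrite telesc /Gt.
have f : ((2 * M + 2) * 'C(2 * M + 2 + M.+1, M.+1) = 3 * M.+1 * 'C(2 * M + 1 + M.+1, M.+1))%N.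
  have := mul_bin_down (3 * M + 3) M.+1.
  have -> : (3 * M + 3).-1 = (2 * M + 1 + M.+1)%N by lia.
  have -> : (3 * M + 3 - M.+1 = 2 * M + 2)%N by lia.
  have -> : (3 * M + 3 = 2 * M + 2 + M.+1)%N by lia.
  by move=> <-; have -> : (2 * M + 2 + M.+1 = 3 * M.+1)%N by lia.
have e := congr1 (fun n => n%:R : rat) f; rewrite /= !natrM in e.
transitivity (rr ^+ M.+1 * ((2 * M + 2)%:R * ('C(2 * M + 2 + M.+1, M.+1))%:R)); first ring.
rewrite e; ring.
Qed.

Definition cj (k N : nat) : rat := (2%:R / 3%:R) ^+ k * (1 / 9%:R) ^+ N * Ssum (2 * N + k + 1) N.
Definition c0 (N : nat) : rat := (1 / 9%:R) ^+ N * Ssum (2 * N) N.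
Definition ee (j N : nat) : rat := if j is k.+1 then cj k N / 6%:R else c0 N / 4%:R.

Lemma ee00 : ee 0 0 = 1 / 4%:R.
Proof. by rewrite /ee /c0 S0 expr0 !mul1r. Qed.

Lemma ee0S M : 4%:R * ee 0 M.+1 = 2%:R * (ee 1 M + ee 2 M).
Proof.
rewrite /ee /c0 /cj.
have -> : (2 * M.+1 = 2 * M + 2)%N by lia.
have -> : (2 * M + 1 + 1 = 2 * M + 2)%N by lia.
rewrite ST addn0 exprS; by field.
Qed.

Lemma eeS0 j : ee j.+1 0 = 2%:R / 3%:R * ee j 0.
Proof.
case: j => [|k]; rewrite /ee /c0 /cj !S0 ?exprS; by field.
Qed.

Lemma eeSS j M : ee j.+1 M.+1 = 2%:R / 3%:R * ee j M.+1 + 1 / 3%:R * ee j.+3 M.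
Proof.
case: j => [|k]; rewrite /ee /c0 /cj.
  have -> : (2 * M.+1 + 0 + 1 = (2 * M + 2).+1)%N by lia.
  have -> : (2 * M + 2 + 1 = (2 * M + 2).+1)%N by lia.
  have -> : (2 * M.+1 = 2 * M + 2)%N by lia.
  rewrite SP /rr !exprS; by field.
have -> : (2 * M.+1 + k.+1 + 1 = (2 * M + k + 3).+1)%N by lia.
have -> : (2 * M + k.+3 + 1 = (2 * M + k + 3).+1)%N by lia.
have -> : (2 * M.+1 + k + 1 = (2 * M + k + 3))%N by lia.
rewrite SP /rr !exprS; by field.
Qed.

Lemma formula_j k N : \sum_(i < N.+1) (2 ^ (2 * i + k.+1 - 1))%:R / (3 ^ (2 * N + i + k.+1 - 1))%:R
     * ('C(2 * N + k.+1 + i, i))%:R = cj k N.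
Proof.
rewrite /cj /Ssum mulr_sumr; apply: eq_bigr => i _.
have -> : (2 * i + k.+1 - 1 = 2 * i + k)%N by lia.
have -> : (2 * N + i + k.+1 - 1 = 2 * N + i + k)%N by lia.
have -> : (2 * N + k.+1 + i = 2 * N + k + 1 + i)%N by lia.
rewrite (expnD 2 (2 * i) k) (expnM 2 2 i) (expnD 3 (2 * N + i) k) (expnD 3 (2 * N) i) (expnM 3 2 N) !natrM !natrX !expr_div_n expr1n /rr.
field; by rewrite ?expf_neq0.
Qed.

Lemma formula_0 N : \sum_(i < N.+1) (2 ^ (2 * i))%:R / (3 ^ (2 * N + i))%:R
     * ('C(2 * N + i, i))%:R = c0 N.
Proof.
rewrite /c0 /Ssum mulr_sumr; apply: eq_bigr => i _.
rewrite (expnM 2 2 i) (expnD 3 (2 * N) i) (expnM 3 2 N) !natrM !natrX !expr_div_n expr1n /rr.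
field; by rewrite ?expf_neq0.
Qed.

Lemma formula_b N : \sum_(i < N.+1) (2 ^ (2 * i))%:R / (3 ^ (2 * N + i + 1))%:R
     * ('C(2 * N + 1 + i, i))%:R = 1 / 3%:R * cj 0 N.
Proof.
rewrite /cj /Ssum !mulr_sumr; apply: eq_bigr => i _.
rewrite addn0 (expnM 2 2 i) (expnD 3 (2 * N + i) 1) (expnD 3 (2 * N) i) (expnM 3 2 N) !natrM !natrX !expr_div_n expr1n /rr.
field; by rewrite ?expf_neq0.
Qed.

Lemma hAk_lem (Di a : FPS) k :
  a = cst (2%:R / 3%:R) + cst (1 / 3%:R) * XX * a ^+ 3 ->
  Di * a ^+ k.+1 = cst (2%:R / 3%:R) * (Di * a ^+ k) + cst (1 / 3%:R) * (XX * (Di * a ^+ k.+3)).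
Proof.
move=> hA; transitivity (Di * a ^+ k * a); first by rewrite exprSr mulrA.
by rewrite [X in _ * X]hA !exprS; ring.
Qed.

Lemma E_ee (Di a : FPS) :
  a = cst (2%:R / 3%:R) + cst (1 / 3%:R) * XX * a ^+ 3 ->
  cst 4%:R * Di = 1 + cst 2%:R * XX * Di * a + cst 2%:R * XX * Di * a ^+ 2 ->
  forall N j, (Di * a ^+ j) N = ee j N.
Proof.
move=> hA hB.
have hB' : cst 4%:R * Di = 1 + XX * (cst 2%:R * (Di * a) + cst 2%:R * (Di * a ^+ 2)) by rewrite hB; ring.
have E0 N : 4%:R * (Di * a ^+ 0) N = (if N == 0%N then 1 else 0) +
     (if N is M.+1 then 2%:R * ((Di * a ^+ 1) M + (Di * a ^+ 2) M) else 0).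
  rewrite expr0 mulr1 -cmulE hB' faddE f1E XmulE; case: N => // M.
  by rewrite faddE !cmulE expr1 mulrDr.
have ES j N : (Di * a ^+ j.+1) N = 2%:R / 3%:R * (Di * a ^+ j) N +
     (if N is M.+1 then 1 / 3%:R * (Di * a ^+ j.+3) M else 0).
  by rewrite (hAk_lem _ _ hA) faddE !cmulE XmulE; case: N => [|M]; rewrite ?mulr0.
elim=> [|M IH] j.
  elim: j => [|j IHj].
    apply: (@mulfI _ 4%:R) => //; rewrite E0 ee00 /=; by field.
  by rewrite ES IHj eeS0 addr0.
elim: j => [|j IHj].
  apply: (@mulfI _ 4%:R) => //; rewrite E0 ee0S /= !IH; by rewrite add0r.
by rewrite ES IHj IH eeSS.
Qed.

Lemma sum_evalE I (r : seq I) (P : pred I) (F : I -> FPS) n :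
  (\sum_(k <- r | P k) F k) n = \sum_(k <- r | P k) F k n.
Proof. by apply: (big_morph (fun f : FPS => f n)) => [f g|]; rewrite ?faddE ?f0E. Qed.

Lemma bps_mulE (F H : bps) i : bps_mul F H i = \sum_(a < i.+1) (F a : FPS) * H (i - a)%N.
Proof. by apply: functional_extensionality => n; rewrite sum_evalE. Qed.

Lemma bps_of_zE f a : bps_of_z f a = if a == 0%N then (f : FPS) else 0.
Proof. by apply: functional_extensionality => n; rewrite /bps_of_z; case: a. Qed.
Lemma bps_VE a : bps_V a = if a == 1%N then XX else 0.
Proof. by apply: functional_extensionality => n; rewrite /bps_V; case: a => [|[|a]]. Qed.
Lemma bps_constE c a : bps_const c a = if a == 0%N then cst c else 0.
Proof. by apply: functional_extensionality => n; rewrite /bps_const; case: a. Qed.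
Lemma bps_addE (F H : bps) k : bps_add F H k = (F k : FPS) + H k.
Proof. by []. Qed.
Lemma fps_sub3E f : fps_sub3 f = sub3 f.
Proof. by []. Qed.
Lemma bps_scaleE c F a : bps_scale c F a = cst c * (F a : FPS).
Proof. by rewrite -fps_scaleE. Qed.

Lemma sumL0 (f : FPS) (H : nat -> FPS) i :
  \sum_(a < i.+1) (if (a : nat) == 0%N then f else 0) * H (i - a)%N = f * H i.
Proof.
rewrite big_ord_recl /= subn0 big1 ?addr0 // => a _.
by rewrite /bump /= add1n mul0r.
Qed.

Lemma sumR0 (F : nat -> FPS) (h : FPS) i :
  \sum_(a < i.+1) F a * (if (i - a)%N == 0%N then h else 0) = F i * h.
Proof.
rewrite big_ord_recr /= subnn eqxx big1 ?add0r // => a _.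
by rewrite subn_eq0 leqNgt ltn_ord mulr0.
Qed.

Lemma sumL1 (f : FPS) (H : nat -> FPS) i :
  \sum_(a < i.+1) (if (a : nat) == 1%N then f else 0) * H (i - a)%N = if i is i'.+1 then f * H i' else 0.
Proof.
case: i => [|i]; first by rewrite big_ord1 mul0r.
rewrite big_ord_recl /= mul0r add0r.
under eq_bigr => a _ do rewrite /bump /= add1n subSS eqSS.
exact: sumL0 (fun k => H k) i.
Qed.

Lemma sum_if_eq m i (F : nat -> rat) : (i < m)%N ->
  \sum_(k < m) (if i == (k : nat) then F k else 0) = F i.
Proof.
move=> im; rewrite (bigD1 (Ordinal im)) //= eqxx big1 ?addr0 // => k /negbTE.
by rewrite -val_eqE /= eq_sym => ->.
Qed.

Lemma W_E (A3 : FPS) i : bps_mul (bps_of_z A3) bps_V i = if i == 1%N then A3 * XX else 0.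
Proof.
rewrite bps_mulE; under eq_bigr => a _ do rewrite bps_of_zE.
by rewrite sumL0 bps_VE; case: eqP => _; rewrite ?mulr0.
Qed.

Lemma Wpow (A3 : FPS) k i : bps_pow (bps_mul (bps_of_z A3) bps_V) k i = if i == k then (A3 * XX) ^+ k else 0.
Proof.
elim: k i => [|k IH] i; first by rewrite /bps_pow /= bps_constE cst1 expr0.
have -> : bps_pow (bps_mul (bps_of_z A3) bps_V) k.+1 = bps_mul (bps_mul (bps_of_z A3) bps_V) (bps_pow (bps_mul (bps_of_z A3) bps_V) k) by [].
rewrite bps_mulE; under eq_bigr => a _ do rewrite W_E.
rewrite sumL1; case: i => [|i] //; rewrite IH eqSS; case: ifP => _; by rewrite ?mulr0 // exprS.
Qed.

Lemma geomE (A3 : FPS) i : bps_geom (bps_mul (bps_of_z A3) bps_V) i = (A3 * XX) ^+ i.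
Proof.
apply: functional_extensionality => n; rewrite /bps_geom.
under eq_bigr => k _ do rewrite Wpow if_arg f0E.
by rewrite (sum_if_eq (fun k => ((A3 * XX) ^+ k) n)) // ltnS leq_addr.
Qed.

Unset Implicit Arguments.

Theorem theorem2 (g : nat -> fps) (gb : fps) (t : fps)
  (* the defining system of the g_i and g_beta *)
  (h0 : g 0%N = fps_add (fps_const 1)
          (fps_add (fps_mul fps_X gb) (fps_scale q_step (fps_mul fps_X (g 2%N)))))
  (hb : gb = fps_scale q_step (fps_mul fps_X (g 1%N)))
  (h1 : g 1%N = fps_add (fps_mul fps_X (g 0%N))
          (fps_scale q_step (fps_mul fps_X (g 3%N))))
  (hi : forall i, (2 <= i)%N ->
          g i = fps_add (fps_scale p_step (fps_mul fps_X (g i.-1)))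
                        (fps_scale q_step (fps_mul fps_X (g i.+2))))
  (* t = t(x): t(0) = 0 and x = 27/4 t (1-t)^2 *)
  (ht0 : t 0%N = 0)
  (ht : fps_X = fps_scale (27%:R / 4%:R)
          (fps_mul t (fps_pow (fps_add (fps_const 1) (fps_scale (-1) t)) 2))) :
  let G : bps := fun i n => g i n in
  (* a = 2/(3(1-t)),  Dinv = 1/((1-3t)(4-3t)), as series in x *)
  let a : fps := fps_scale (2%:R / 3%:R)
                   (fps_inv (fps_add (fps_const 1) (fps_scale (-1) t))) in
  let Dinv : fps := fps_inv (fps_mul (fps_add (fps_const 1) (fps_scale (-3%:R) t))
                                     (fps_add (fps_const 4%:R) (fps_scale (-3%:R) t))) in
  let W : bps := bps_mul (bps_of_z (fps_sub3 a)) bps_V in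
  (* (i) *)
  (G = bps_mul (bps_scale 2%:R (bps_mul (bps_add (bps_const 2%:R) W)
                                         (bps_of_z (fps_sub3 Dinv))))
               (bps_geom W)
   /\ (forall j n, G j n != 0 -> (j <= n)%N /\ (3 %| (n - j))%N))
  (* (ii) *)
  /\ (forall j, (1 <= j)%N ->
        (fun k => G j (j + 3 * k)%N) = fps_scale 6%:R (fps_mul Dinv (fps_pow a j))
        /\ g j = fps_shift j (fps_sub3 (fps_scale 6%:R (fps_mul Dinv (fps_pow a j)))))
  (* (iii) *)
  /\ (forall j N, (1 <= j)%N ->
        G j (j + 3 * N)%N =
        \sum_(i < N.+1) (2 ^ (2 * i + j - 1))%:R / (3 ^ (2 * N + i + j - 1))%:R
                        * ('C(2 * N + j + i, i))%:R)
  (* (iv) *)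
  /\ (forall N,
        g 0%N (3 * N)%N =
          \sum_(i < N.+1) (2 ^ (2 * i))%:R / (3 ^ (2 * N + i))%:R
                          * ('C(2 * N + i, i))%:R
        /\ gb (3 * N + 2)%N = (1 / 3%:R) * g 1%N (3 * N + 1)%N
        /\ (1 / 3%:R) * g 1%N (3 * N + 1)%N =
          \sum_(i < N.+1) (2 ^ (2 * i))%:R / (3 ^ (2 * N + i + 1))%:R
                          * ('C(2 * N + 1 + i, i))%:R).
Proof.
move=> G a Dinv W.
rewrite /p_step /q_step in h0 hb h1 hi *.
set s := fps_inv (fps_add (fps_const 1) (fps_scale (-1) t)).
have e1t : fps_add (fps_const 1) (fps_scale (-1) t) = 1 - (t : FPS).
  by rewrite fps_addE fps_scaleE fps_constE cst1 rmorphN1 mulN1r.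
have hs : (1 - (t : FPS)) * s = 1.
  rewrite /s e1t; apply: fps_invP.
  by rewrite fsubE f1E ht0 subr0 oner_eq0.
rewrite e1t fps_powE fps_mulE fps_scaleE fps_XE in ht.
set Di := fps_inv (fps_mul (fps_add (fps_const 1) (fps_scale (-3%:R) t))
                           (fps_add (fps_const 4%:R) (fps_scale (-3%:R) t))).
have eD : fps_mul (fps_add (fps_const 1) (fps_scale (-3%:R) t))
                  (fps_add (fps_const 4%:R) (fps_scale (-3%:R) t))
          = (1 - cst 3%:R * t) * (cst 4%:R - cst 3%:R * t).
  by rewrite !fps_addE !fps_scaleE fps_mulE !fps_constE cst1 !rmorphN !mulNr.
have hD : ((1 - cst 3%:R * t) * (cst 4%:R - cst 3%:R * t)) * Di = 1.
  rewrite /Di eD; apply: fps_invP.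
  by rewrite fmulE big_ord1 !fsubE f1E !cmulE !cstE ht0 /=.
set a' := cst (2%:R / 3%:R) * s.
have hA : a' = cst (2%:R / 3%:R) + cst (1 / 3%:R) * XX * a' ^+ 3 := identA hs ht.
have hB := identB hs ht hD.
have hsys := H_sys hA hB.
have gsys : sys g gb.
  split.
  - by rewrite {1}h0 !fps_addE !fps_scaleE !fps_mulE fps_constE cst1 fps_XE addrA.
  - by rewrite {1}hb !fps_scaleE fps_mulE fps_XE.
  - by rewrite {1}h1 !fps_addE !fps_scaleE !fps_mulE fps_XE.
  - by move=> i hi2; rewrite {1}hi // !fps_addE !fps_scaleE !fps_mulE fps_XE.
have uniq := sys_unique gsys hsys.
have gH i : g i = Hf Di a' i.
  by apply: functional_extensionality => n; case: (uniq n) => ->.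
have EE := E_ee hA hB.
have aE : a = a' by rewrite /a fps_scaleE.
have GE i n : G i n = Hf Di a' i n by rewrite /G gH.
split; [split|split; [|split]].
-
  apply: functional_extensionality => i.
  change (@eq FPS (g i) (bps_mul (bps_scale 2%:R (bps_mul (bps_add (bps_const 2%:R) W) (bps_of_z (fps_sub3 Dinv)))) (bps_geom W) i)).
  rewrite gH bps_mulE /W.
  have LE k : bps_scale 2%:R (bps_mul (bps_add (bps_const 2%:R) (bps_mul (bps_of_z (fps_sub3 a)) bps_V)) (bps_of_z (fps_sub3 Dinv))) k
       = (if k == 0%N then cst 2%:R * (cst 2%:R * sub3 Di) else 0) + (if k == 1%N then cst 2%:R * (sub3 a' * XX * sub3 Di) else 0).
    rewrite bps_scaleE bps_mulE.
    under eq_bigr => b _ do rewrite bps_of_zE.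
    rewrite (sumR0 (fun b => bps_add (bps_const 2%:R) (bps_mul (bps_of_z (fps_sub3 a)) bps_V) b)).
    rewrite bps_addE.
    rewrite bps_constE W_E aE.
    by case: k => [|[|k]] /=; rewrite ?addr0 ?add0r ?mulr0 ?mul0r ?mulr0.
  under eq_bigr => k _ do rewrite geomE LE mulrDl.
  rewrite big_split /= sumL0 sumL1.
  rewrite aE !fps_sub3E; case: i => [|i]; rewrite ?Hf0 ?HfS; s3; rewrite ?rmorph_nat ?expr0 ?addr0 ?mulr1; first by ring.
  rewrite !exprMn !exprS; ring.
-
  move=> j n; rewrite GE; case: j => [|j]; rewrite ?Hf0 ?HfS.
    by rewrite sub3E subn0; case: ifP => // _; rewrite eqxx.
  by rewrite XpowE sub3E; case: ifP => // _; case: ifP => //; rewrite eqxx.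
-
  case=> [|j] // _; split.
    apply: functional_extensionality => k.
    by rewrite GE HfS XpowE' sub3_3 fps_scaleE fps_mulE fps_powE aE.
  by rewrite gH HfS shiftE fps_scaleE fps_mulE fps_powE aE.
-
  case=> [|k] N // _.
  rewrite GE HfS XpowE' sub3_3 cmulE EE formula_j /ee.
  by field.
-
  move=> N; split; last split.
  + have := EE N 0%N; rewrite expr0 mulr1 => E0.
    rewrite gH Hf0 sub3_3 cmulE E0 formula_0 /ee.
    by field.
  + have -> : (3 * N + 2 = (3 * N + 1).+1)%N by rewrite addnS.
    rewrite hb /fps_scale.
    by congr (_ * _); exact: (XmulE (g 1%N) (3 * N + 1).+1).
  + rewrite gH formula_b addnC HfS XpowE' sub3_3 cmulE EE /ee.
    by field.
Qed.
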